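(* Let $h\in\mathcal H$, $k_0=k_0(h)$, $k_f=k_f(h)$. Then $$k_0\le \operatorname{hdepth}(h)\le \min\{k_f,\ k_0+c(h)\}.$$
   Context: $\mathcal H$ denotes the set of nonzero functions $h:\mathbb Z\to\mathbb Z_{\ge 0}$ such that $h(j)=0$ for all sufficiently negative $j$. For $h\in\mathcal H$ and integers $k\le d$, set $\beta_k^d(h)=\sum_{j\le k}(-1)^{k-j}\binom{d-j}{k-j}h(j)$, and $\operatorname{hdepth}(h)=\max\{d\in\mathbb Z:\ \beta_k^d(h)\ge 0\text{ for all integers }k\le d\}$. Further $k_0(h)=\min\{j: h(j)>0\}$; $k_f(h)=\min\{j\ge k_0(h): h(j+1)=0\}$, with $k_f(h)=+\infty$ if no such $j$ exists; and $c(h)=\left\lfloor h(k_0(h)+1)/h(k_0(h))\right\rfloor$. *)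

(* Defs.v *)
From mathcomp Require Import all_boot all_order all_algebra.
Set Implicit Arguments. Unset Strict Implicit. Unset Printing Implicit Defensive.
Import Order.TTheory GRing.Theory Num.Theory.
Local Open Scope ring_scope.

Definition inH (h : int -> nat) : Prop :=
  (exists j, h j <> 0%N) /\ (exists N : int, forall j : int, j < N -> h j = 0%N).

(* beta_k^d(h) = sum_{j <= k} (-1)^(k-j) C(d-j, k-j) h(j), computed under the
   knowledge that h(j) = 0 for all j < L (L a lower bound of the support):
   writing j = k - i, the sum runs over i = 0 .. k - L, and
   (-1)^(k-j) C(d-j,k-j) = (-1)^i C((d-k)+i, i).  (For k <= d.) *)
Definition beta_from (L : int) (h : int -> nat) (k d : int) : int :=
  \sum_(i < `|k - L|%N.+1)
     (-1) ^+ i * ('C(`|d - k|%N + i, i))%:R * (h (k - i%:Z))%:R.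

Definition hdepth_ok (L : int) (h : int -> nat) (d : int) : Prop :=
  forall k : int, k <= d -> 0 <= beta_from L h k d.

Definition is_hdepth (L : int) (h : int -> nat) (D : int) : Prop :=
  hdepth_ok L h D /\ forall d : int, hdepth_ok L h d -> d <= D.

(* Main.v *)
Require Import Defs.
From mathcomp Require Import all_boot all_order all_algebra.
From mathcomp Require Import zify ring.
Import Order.TTheory GRing.Theory Num.Theory.
Local Open Scope ring_scope.

Definition B (n m : nat) (f : nat -> nat) : int :=
  \sum_(i < n.+1) (-1) ^+ i * ('C(m + i, i))%:R * (f i)%:R.

Lemma betaE L h k d : beta_from L h k d =
  B (absz (k - L)%R%R) (absz (d - k)%R%R) (fun i => h (k - i%:Z)).
Proof. by []. Qed.

Lemma B_rec n m f : B n.+1 m.+1 f = B n.+1 m f - B n m.+1 (fun i => f i.+1).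
Proof.
rewrite /B big_ord_recl [in X in _ = X - _]big_ord_recl /= !bin0 -addrA.
congr (_ + _); rewrite -sumrB; eapply eq_bigr; intros i _.
rewrite /bump /= add1n addnS binS addSnnS natrD exprS; ring.
Qed.

Lemma B_diag n f : B n.+1 0 f = (f 0%N)%:R - B n 0 (fun i => f i.+1).
Proof.
rewrite /B big_ord_recl /= bin0 -sumrN; congr (_ + _); first by rewrite expr0 !mul1r.
eapply eq_bigr; intros i _.
rewrite /bump /= add1n !add0n !binn exprS; ring.
Qed.

Lemma B0 m f : B 0 m f = (f 0%N)%:R.
Proof. by rewrite /B big_ord1 /= bin0 expr0 !mul1r. Qed.

Lemma beta_lt (h : int -> nat) (k0 k d : int) : (forall j, j < k0 -> h j = 0%N) -> k < k0 ->
  beta_from k0 h k d = 0.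
Proof. move=> hz lt; rewrite /beta_from; apply: big1 => i _; rewrite hz ?mulr0 //; lia. Qed.

Lemma beta_k0 (h : int -> nat) (k0 d : int) : beta_from k0 h k0 d = (h k0)%:R.
Proof. rewrite betaE; have -> : absz (k0 - k0)%R = 0%N by lia. by rewrite B0 subr0. Qed.

Lemma beta_rec (h : int -> nat) (k0 k d : int) : k0 < k -> k < d ->
  beta_from k0 h k d = beta_from k0 h k (d-1) - beta_from k0 h (k-1) (d-1).
Proof.
move=> l1 l2; rewrite !betaE.
have -> : absz (k - k0)%R = (absz (k - 1 - k0)%R).+1 by lia.
have -> : absz (d - k)%R = (absz (d - 1 - k)%R).+1 by lia.
have -> : absz (d - 1 - (k - 1))%R = (absz (d - 1 - k)%R).+1 by lia.
rewrite B_rec; congr (_ - _).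
have e : forall i : nat, k - (i.+1)%:Z = k - 1 - i%:Z by move=> i; lia.
by rewrite /B; apply: eq_bigr => i _; rewrite e.
Qed.

Lemma beta_diag (h : int -> nat) (k0 d : int) : k0 < d ->
  beta_from k0 h d d + beta_from k0 h (d-1) (d-1) = (h d)%:R.
Proof.
move=> l; rewrite !betaE.
have -> : absz (d - k0)%R = (absz (d - 1 - k0)%R).+1 by lia.
have -> : absz (d - d)%R = 0%N by lia.
have -> : absz (d - 1 - (d - 1))%R = 0%N by lia.
rewrite B_diag subr0.
have e : forall i : nat, d - (i.+1)%:Z = d - 1 - i%:Z by move=> i; lia.
have -> : B (absz (d - 1 - k0)%R) 0 (fun i => h (d - (i.+1)%:Z)) =
          B (absz (d - 1 - k0)%R) 0 (fun i => h (d - 1 - i%:Z)).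
  by rewrite /B; apply: eq_bigr => i _; rewrite e.
by rewrite subrK.
Qed.

Lemma chain (h : int -> nat) (k0 d : int) : (forall j, j < k0 -> h j = 0%N) ->
  hdepth_ok k0 h d -> forall n : nat, k0 + n%:Z < d ->
  (h k0)%:R <= beta_from k0 h (k0 + n%:Z) (d - 1).
Proof.
move=> hz ok; elim=> [|n IH] l.
  by rewrite addr0 beta_k0.
have E := beta_rec h k0 (k0 + n.+1%:Z) d.
have e : k0 + n.+1%:Z - 1 = k0 + n%:Z by lia.
rewrite e in E.
have h1 := ok (k0 + n.+1%:Z).
have h2 := IH.
have l1 : k0 < k0 + n.+1%:Z by lia.
have l2 : k0 + n%:Z < d by lia.
have l3 : k0 + n.+1%:Z <= d by lia.
move: (E l1 l); move: (h1 l3) (h2 l2); lia.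
Qed.

Lemma mono (h : int -> nat) (k0 d : int) : (forall j, j < k0 -> h j = 0%N) ->
  hdepth_ok k0 h d -> hdepth_ok k0 h (d - 1).
Proof.
move=> hz ok k lk.
case: (ltP k k0) => lk0; first by rewrite beta_lt.
have c := chain _ _ _ hz ok (absz (k - k0)%R) ltac:(lia).
have -> : k = k0 + (absz (k - k0)%R)%:Z by lia.
lia.
Qed.

Lemma mono_n (h : int -> nat) (k0 d : int) : (forall j, j < k0 -> h j = 0%N) ->
  hdepth_ok k0 h d -> forall n : nat, hdepth_ok k0 h (d - n%:Z).
Proof.
move=> hz ok; elim=> [|n IH]; first by rewrite subr0.
have -> : d - n.+1%:Z = d - n%:Z - 1 by lia.
exact: mono.
Qed.

Lemma cbound (h : int -> nat) (k0 d : int) : (0 < h k0)%N ->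
  hdepth_ok k0 h d -> k0 < d -> (absz (d - k0)%R <= h (k0 + 1)%R %/ h k0)%N.
Proof.
move=> hp ok l.
have := ok (k0 + 1) ltac:(lia).
rewrite betaE.
have -> : absz (k0 + 1 - k0)%R = 1%N by lia.
rewrite /B big_ord_recr big_ord1 /= bin0 bin1 subr0 addrK expr0 expr1 !mul1r.
rewrite mulN1r mulNr -natrM subr_ge0 ler_nat => H.
rewrite leq_divRL //.
have -> : absz (d - k0)%R = (absz (d - (k0 + 1))%R + 1)%N by lia.
exact: H.
Qed.

From Stdlib Require Import Classical.

Lemma maxP (P : nat -> Prop) (c : nat) : P 0%N -> (forall n, P n -> (n <= c)%N) ->
  exists m, P m /\ forall n, P n -> (n <= m)%N.
Proof.
move=> P0 Pc.
suff : forall j, exists m, P m /\ forall n, P n -> (n <= j)%N -> (n <= m)%N.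
  case/(_ c) => m [Pm Hm]; exists m; split=> // n Pn; exact: Hm n Pn (Pc n Pn).
elim=> [|j [m [Pm Hm]]].
  by exists 0%N; split=> // n _.
case: (classic (P j.+1)) => Pj.
  by exists j.+1; split=> // n _.
exists m; split=> // n Pn lnj; apply: Hm => //.
case: (eqVneq n j.+1) => [e|ne]; first by rewrite e in Pn.
lia.
Qed.

Theorem proposition1p5 (h : int -> nat) (k0 : int) :
  inH h ->
  (* k0 = k0(h) = min { j | h j > 0 } *)
  (0 < h k0)%N -> (forall j : int, j < k0 -> h j = 0%N) ->
  exists D : int,
    (* D = hdepth(h) (the maximum exists) *)
    is_hdepth k0 h D /\
    k0 <= D /\
    (* hdepth(h) <= k0 + c(h), with c(h) = floor(h(k0+1)/h(k0)) *)
    D <= k0 + (divn (h (k0 + 1)) (h k0))%:Z /\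
    (* hdepth(h) <= k_f(h) (vacuous when k_f(h) = +oo) *)
    (forall kf : int,
       k0 <= kf -> h (kf + 1) = 0%N ->
       (forall j : int, k0 <= j -> j < kf -> h (j + 1) <> 0%N) ->
       D <= kf).
Proof.
move=> _ hp hz.
have okk0 : hdepth_ok k0 h k0.
  move=> k lk; case: (ltP k k0) => lk0; first by rewrite beta_lt.
  have -> : k = k0 by lia.
  by rewrite beta_k0.
have bnd : forall d, hdepth_ok k0 h d -> d <= k0 + (divn (h (k0 + 1)) (h k0))%:Z.
  move=> d okd; case: (lerP d k0) => ld; first by apply: le_trans ld _; rewrite lerDl.
  have := cbound _ _ _ hp okd ld; lia.
have P0 : hdepth_ok k0 h (k0 + 0%N%:Z) by rewrite addr0.
have Pc : forall n : nat, hdepth_ok k0 h (k0 + n%:Z) -> (n <= divn (h (k0 + 1)%R) (h k0))%N.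
  move=> n Pn; have := bnd _ Pn; rewrite lerD2l; by [].
have [m [Pm Hm]] := @maxP (fun n : nat => hdepth_ok k0 h (k0 + n%:Z)) _ P0 Pc.
exists (k0 + m%:Z); split; [split|].
- exact: Pm.
- move=> d okd; case: (lerP d k0) => ld; first lia.
  have e : k0 + (absz (d - k0)%R)%:Z = d by lia.
  have := Hm (absz (d - k0)%R); rewrite /= e => /(_ okd); lia.
split; first lia.
split; first by have := bnd _ Pm; lia.
move=> kf lk hkf _.
case: (lerP (k0 + m%:Z) kf) => // ltD; exfalso.
have okf : hdepth_ok k0 h (kf + 1).
  have := mono_n _ _ _ hz Pm (absz (k0 + m%:Z - (kf + 1))%R).
  by have -> : k0 + m%:Z - (absz (k0 + m%:Z - (kf + 1))%R)%:Z = kf + 1 by lia.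
have dg := beta_diag h k0 (kf + 1) ltac:(lia).
rewrite hkf in dg.
have b1 := okf (kf + 1) (lexx _).
have b2 := chain _ _ _ hz okf (absz (kf - k0)%R) ltac:(lia).
have e1 : k0 + (absz (kf - k0)%R)%:Z = kf + 1 - 1 by lia.
rewrite e1 in b2.
lia.
Qed.
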